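(* Let $\Sigma$ be an oriented graph on $n$ vertices with skew adjacency matrix $S$ and walk-matrix $W=W(\Sigma)$, and suppose $W$ is nonsingular. Let $Q$ be a real orthogonal matrix with $Qe=e$ and $Q^{\mathrm T}SQ=S^{\mathrm T}$. Then $Q$ is symmetric. In particular, if $P$ is a permutation matrix with $P^{\mathrm T}SP=S^{\mathrm T}$, then $P$ is symmetric and $P^2=I_n$.
   Context: The skew adjacency matrix $S=(S_{ij})$ of an oriented graph on vertices $v_1,\dots,v_n$ has $S_{ij}=1$ if $(v_i,v_j)$ is a directed edge, $S_{ij}=-1$ if $(v_j,v_i)$ is a directed edge, and $S_{ij}=0$ otherwise. The walk-matrix is $W(\Sigma)=[e,Se,\ldots,S^{n-1}e]$ with $e$ the all-ones vector. *)

(* Defs.v *)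
From HB Require Import structures.
From mathcomp Require Import all_boot all_order all_algebra.
From mathcomp Require Import reals.
Set Implicit Arguments. Unset Strict Implicit. Unset Printing Implicit Defensive.
Import GRing.Theory Num.Theory.
Local Open Scope ring_scope.

Definition oriented_graph (n : nat) (E : rel 'I_n) : Prop :=
  (forall i, ~~ E i i) /\ (forall i j, ~~ (E i j && E j i)).

Definition skew_adj (R : pzRingType) (n : nat) (E : rel 'I_n) : 'M[R]_n :=
  \matrix_(i, j) ((E i j)%:R - (E j i)%:R).

Definition ones (R : pzRingType) (n : nat) : 'cV[R]_n := const_mx 1.

Definition walk_matrix (R : pzRingType) (n : nat) (S : 'M[R]_n) : 'M[R]_n :=
  \matrix_(i, j) ((S ^+ j *m ones R n) i ord0).

Definition orthogonal_mx (R : pzRingType) (n : nat) (Q : 'M[R]_n) : Prop :=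
  Q^T *m Q = 1%:M.

(* Main.v *)
Require Import Defs.
From HB Require Import structures.
From mathcomp Require Import all_boot all_order all_algebra.
From mathcomp Require Import reals.
From mathcomp Require Import perm.
Import GRing.Theory Num.Theory.
Local Open Scope ring_scope.

Lemma skew_tr (R : realType) (n : nat) (E : rel 'I_n) :
  (skew_adj R E)^T = - skew_adj R E.
Proof. by apply/matrixP => i j; rewrite !mxE opprB. Qed.

Lemma anti_pow (R : realType) (n : nat) (S M : 'M[R]_n) :
  M *m S = - (S *m M) -> forall j, M *m S ^+ j = (-1) ^+ j *: (S ^+ j *m M).
Proof.
move=> H; elim=> [|j IH].
  by rewrite !expr0 scale1r mulmx1 mul1mx.
rewrite !exprSr.
change (M *m (S ^+ j *m S) = (-1) ^+ j * (-1) *: (S ^+ j *m S *m M)).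
rewrite mulmxA IH -scalemxAl -mulmxA H -scalerA; congr (_ *: _).
by rewrite mulmxN scaleN1r mulmxA.
Qed.

Lemma walk_mul (R : realType) (n : nat) (S M : 'M[R]_n) :
  M *m S = - (S *m M) -> M *m ones R n = ones R n ->
  M *m walk_matrix S = \matrix_(i, j) ((-1) ^+ j * walk_matrix S i j).
Proof.
move=> H He; apply/matrixP => i j.
have := congr1 (fun A : 'M[R]_(n,1) => A i ord0)
  (congr1 (fun A => A *m ones R n) (@anti_pow _ _ _ _ H j)).
rewrite /= -scalemxAl -!mulmxA He => E1.
rewrite [RHS]mxE in E1.
transitivity ((M *m (S ^+ j *m ones R n)) i ord0).
  rewrite [LHS]mxE [RHS]mxE; apply: eq_bigr => k _; by rewrite /walk_matrix mxE.
by rewrite E1 /walk_matrix !mxE.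
Qed.

Lemma sym_of (R : realType) (n : nat) (E : rel 'I_n) (Q : 'M[R]_n) :
  walk_matrix (skew_adj R E) \in unitmx ->
  orthogonal_mx Q ->
  Q *m ones R n = ones R n ->
  Q^T *m skew_adj R E *m Q = (skew_adj R E)^T ->
  Q^T = Q.
Proof.
set S := skew_adj R E => HW HO He HS.
rewrite skew_tr in HS.
have HO' : Q *m Q^T = 1%:M by apply: mulmx1C.
have H1 : Q *m S = - (S *m Q).
  have : Q *m (Q^T *m S *m Q) = Q *m - S by rewrite HS.
  rewrite !mulmxA HO' mul1mx mulmxN => ->; by rewrite opprK.
have H2 : Q^T *m S = - (S *m Q^T).
  have : Q^T *m S *m Q *m Q^T = - S *m Q^T by rewrite HS.
  by rewrite -mulmxA HO' mulmx1 mulNmx.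
have He' : Q^T *m ones R n = ones R n.
  by rewrite -{1}He mulmxA HO mul1mx.
have : Q^T *m walk_matrix S = Q *m walk_matrix S.
  by rewrite (@walk_mul _ _ _ _ H1 He) (@walk_mul _ _ _ _ H2 He').
move=> /(congr1 (fun A => A *m invmx (walk_matrix S))).
by rewrite -!mulmxA mulmxV // !mulmx1.
Qed.

Theorem lemma2p10 (R : realType) (n : nat) (E : rel 'I_n) :
  oriented_graph E ->
  walk_matrix (skew_adj R E) \in unitmx ->
  (forall Q : 'M[R]_n,
      orthogonal_mx Q ->
      Q *m ones R n = ones R n ->
      Q^T *m skew_adj R E *m Q = (skew_adj R E)^T ->
      Q^T = Q)
  /\
  (forall s : 'S_n,
      let P : 'M[R]_n := perm_mx s in
      P^T *m skew_adj R E *m P = (skew_adj R E)^T ->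
      P^T = P /\ P *m P = 1%:M).
Proof.
move=> _ HW; split; first by move=> Q; exact: (@sym_of _ _ E Q).
move=> s P HS.
have HO : orthogonal_mx P.
  by rewrite /orthogonal_mx /P tr_perm_mx -perm_mxM mulVg perm_mx1.
have He : P *m ones R n = ones R n.
  rewrite /P -row_permE; apply/matrixP => i j; by rewrite !mxE.
have HT := @sym_of _ _ E P HW HO He HS.
split => //; by rewrite -{1}HT.
Qed.
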